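(* Assume $h_0x+h_1y>0$ for all $(x,y)\in D$. Let $(x^*,y^* )\in\partial D$ be a minimizer of $\psi$ over $D$ lying on the boundary; such a minimizer exists. Let $A,B\subset[0,1]$ be Borel sets with Lebesgue measures $$|A|=\frac{\mu_+-x^*}{\mu_+-\mu_-},\qquad |B|=\frac{\sigma_+-y^*}{\sigma_+-\sigma_-}.$$ Define $(\mu^*,\sigma^* ):[0,1]\to D$ by - $(\mu^*,\sigma^* )=(\mu_-,\ \sigma_-\chi_B+\sigma_+\chi_{B^c})$ if $x^*=\mu_-$; - $(\mu^*,\sigma^* )=(\mu_+,\ \sigma_-\chi_B+\sigma_+\chi_{B^c})$ if $x^*=\mu_+$; - $(\mu^*,\sigma^* )=(\mu_-\chi_A+\mu_+\chi_{A^c},\ \sigma_-)$ if $y^*=\sigma_-$; - $(\mu^*,\sigma^* )=(\mu_-\chi_A+\mu_+\chi_{A^c},\ \sigma_+)$ if $y^*=\sigma_+$. (At a corner, any applicable case may be used.) Then $(\mu^*,\sigma^* )$ minimizes $$\frac{\Big(\int_0^1\big(h_0\mu(\omega)+h_1\sigma(\omega)\big)d\omega\Big)^2}{\int_0^1\big(\mu^2(\omega)+\sigma^2(\omega)\big)d\omega}$$ over all measurable $(\mu(\cdot),\sigma(\cdot)):[0,1]\to D$.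
   Context: Let $0<\mu_-<\mu_+$ and $0<\sigma_-<\sigma_+$ be real numbers, $D=[\mu_-,\mu_+]\times[\sigma_-,\sigma_+]$, and $h_0,h_1\in\mathbb R$. Write $\mu_M=(\mu_++\mu_-)/2$ and $\sigma_M=(\sigma_++\sigma_-)/2$. For $(x,y)\in D$ let $$\psi(x,y)=\frac{(h_0x+h_1y)^2}{2\mu_Mx+2\sigma_My-\mu_-\mu_+-\sigma_-\sigma_+}.$$ $\chi_A$ denotes the indicator function of $A$, and $A^c=[0,1]\setminus A$. *)

(* Defs.v *)
From HB Require Import structures.
From mathcomp Require Import all_boot all_order all_algebra.
From mathcomp Require Import all_classical all_reals all_analysis.
Set Implicit Arguments. Unset Strict Implicit. Unset Printing Implicit Defensive.
Import Order.TTheory GRing.Theory Num.Theory.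
Local Open Scope classical_set_scope.
Local Open Scope ring_scope.

Section Defs.
Variable R : realType.
Variables (mum mup sgm sgp h0 h1 : R).

Definition inD (x y : R) : Prop := mum <= x <= mup /\ sgm <= y <= sgp.

Definition onBoundaryD (x y : R) : Prop :=
  inD x y /\ (x = mum \/ x = mup \/ y = sgm \/ y = sgp).

Definition muM : R := (mup + mum) / 2.
Definition sgM : R := (sgp + sgm) / 2.

Definition psi (x y : R) : R :=
  (h0 * x + h1 * y) ^+ 2 /
  (2 * muM * x + 2 * sgM * y - mum * mup - sgm * sgp).

Definition psi_minimizer (xs ys : R) : Prop :=
  inD xs ys /\ forall x y, inD x y -> psi xs ys <= psi x y.

Definition J (mu sg : R -> R) : R :=
  (Rintegral (@lebesgue_measure R) (`[0, 1]%classic : set R) (fun w => h0 * mu w + h1 * sg w)) ^+ 2 /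
  Rintegral (@lebesgue_measure R) (`[0, 1]%classic : set R) (fun w => mu w ^+ 2 + sg w ^+ 2).

Definition admissible (mu sg : R -> R) : Prop :=
  measurable_fun (`[0, 1]%classic : set R) mu /\ measurable_fun (`[0, 1]%classic : set R) sg /\
  (forall w, w \in (`[0, 1]%classic : set R) -> inD (mu w) (sg w)).

Local Notation I01 := (`[0, 1]%classic : set R).
Definition star_pair (xs ys : R) (A B : set R) (mus sgs : R -> R) : Prop :=
  let Ac := I01 `\` A in
  let Bc := I01 `\` B in
     (xs = mum /\ forall w, w \in I01 ->
        mus w = mum /\ sgs w = sgm * \1_B w + sgp * \1_Bc w)
  \/ (xs = mup /\ forall w, w \in I01 ->
        mus w = mup /\ sgs w = sgm * \1_B w + sgp * \1_Bc w)
  \/ (ys = sgm /\ forall w, w \in I01 ->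
        mus w = mum * \1_A w + mup * \1_Ac w /\ sgs w = sgm)
  \/ (ys = sgp /\ forall w, w \in I01 ->
        mus w = mum * \1_A w + mup * \1_Ac w /\ sgs w = sgp).
End Defs.

(* Main.v *)
Require Import Defs.
From HB Require Import structures.
From mathcomp Require Import all_boot all_order all_algebra.
From mathcomp Require Import all_classical all_reals all_analysis.
From mathcomp Require Import ring lra.
Set Implicit Arguments. Unset Strict Implicit. Unset Printing Implicit Defensive.
Import Order.TTheory GRing.Theory Num.Theory numFieldNormedType.Exports.
Local Open Scope classical_set_scope.
Local Open Scope ring_scope.
Section Int.
Variable R : realType.
Local Notation I01 := (`[0, 1]%classic : set R).
Local Notation mu := (@lebesgue_measure R).
Lemma mI : @measurable _ (measurableTypeR R) I01.
Proof. exact: measurable_itv. Qed.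
Lemma muI : mu I01 = 1%:E.
Proof. by rewrite lebesgue_measure_itv /= lte01 oppr0 adde0. Qed.

Lemma intg (f : R -> R) lo hi : measurable_fun I01 f ->
  (forall w, I01 w -> lo <= f w <= hi) -> mu.-integrable I01 (EFin \o f).
Proof.
move=> mf hb. 
have := (@measurable_bounded_integrable _ _ _ mu f _ mI).
move=> h; apply: h; first by rewrite [X in (X < _)%E](_ : _ = 1%:E) ?ltry //; exact: muI.
  exact: mf.
exists (`|lo| + `|hi|); split; first exact: num_real.
move=> M HM x Ix; have /andP[h1 h2] := hb x Ix.
apply: le_trans (ltW HM).
have a1 := ler_norm hi; have a2 := ler_norm (- lo); rewrite normrN in a2.
have a3 := normr_ge0 lo.
have a4 := normr_ge0 hi.
rewrite ler_norml; apply/andP; split; lra.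
Qed.

Lemma Rint_cst (c : R) : \int[mu]_(x in I01) c = c.
Proof. transitivity (c * fine (mu I01)); first exact: (Rintegral_cst mu mI c). by rewrite muI mulr1. Qed.

Definition bnd (f : R -> R) := measurable_fun I01 f /\ exists lo hi, forall w, I01 w -> lo <= f w <= hi.

Lemma bnd_int f : bnd f -> mu.-integrable I01 (EFin \o f).
Proof. by case=> mf [lo [hi h]]; exact: intg mf h. Qed.

Lemma Rint_le f g : bnd f -> bnd g -> (forall w, I01 w -> f w <= g w) ->
  \int[mu]_(x in I01) f x <= \int[mu]_(x in I01) g x.
Proof. by move=> bf bg h; apply: (le_Rintegral mI (bnd_int bf) (bnd_int bg)). Qed.

Lemma bnd_cst c : bnd (fun _ => c).
Proof. by split; [exact: measurable_cst | exists c, c => w _; rewrite lexx]. Qed.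

Lemma bnd_lin a b c f g : bnd f -> bnd g -> bnd (fun w => a * f w + b * g w + c).
Proof.
move=> [mf [l1 [u1 h1]]] [mg [l2 [u2 h2]]]; split.
  apply: measurable_realfun.measurable_funD => //; first apply: measurable_realfun.measurable_funD; apply: measurable_realfun.measurable_funM => //; exact: measurable_cst.
exists (- (`|a| * (`|l1| + `|u1|) + `|b| * (`|l2| + `|u2|)) - `|c|).
exists (`|a| * (`|l1| + `|u1|) + `|b| * (`|l2| + `|u2|) + `|c|) => w Iw.
have e1 : `|f w| <= `|l1| + `|u1|.
  have /andP[p q] := h1 w Iw; have := ler_norm u1; have := ler_norm (-l1); rewrite normrN.
  have := normr_ge0 l1; have := normr_ge0 u1; move=> *; rewrite ler_norml; apply/andP; split; lra.
have e2 : `|g w| <= `|l2| + `|u2|.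
  have /andP[p q] := h2 w Iw; have := ler_norm u2; have := ler_norm (-l2); rewrite normrN.
  have := normr_ge0 l2; have := normr_ge0 u2; move=> *; rewrite ler_norml; apply/andP; split; lra.
have e3 : `|a * f w| <= `|a| * (`|l1| + `|u1|) by rewrite normrM ler_wpM2l.
have e4 : `|b * g w| <= `|b| * (`|l2| + `|u2|) by rewrite normrM ler_wpM2l.
have := ler_norml (a * f w) (`|a| * (`|l1| + `|u1|)); rewrite e3 => /esym/andP[p1 p2].
have := ler_norml (b * g w) (`|b| * (`|l2| + `|u2|)); rewrite e4 => /esym/andP[p3 p4].
have := ler_norm c; have := ler_norm (-c); rewrite normrN => *.
apply/andP; split; lra.
Qed.

Lemma bnd_Z a f : bnd f -> bnd (fun x => a * f x).
Proof.
move=> bf; suff -> : (fun x => a * f x) = (fun w => a * f w + 0 * f w + 0) by exact: bnd_lin.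
by apply/funext => x; rewrite mul0r !addr0.
Qed.

Lemma bnd_D f g : bnd f -> bnd g -> bnd (fun x => f x + g x).
Proof.
move=> bf bg; suff -> : (fun x => f x + g x) = (fun w => 1 * f w + 1 * g w + 0) by exact: bnd_lin.
by apply/funext => x; rewrite !mul1r !addr0.
Qed.

Lemma Rint_lin a b c f g : bnd f -> bnd g ->
  \int[mu]_(x in I01) (a * f x + b * g x + c) = a * \int[mu]_(x in I01) f x + b * \int[mu]_(x in I01) g x + c.
Proof.
move=> bf bg.
rewrite (@RintegralD _ _ _ mu _ (fun x => a * f x + b * g x) (fun _ => c)) //; last 2 first.
- exact/bnd_int/bnd_D/bnd_Z/bg/bnd_Z/bf.
- exact/bnd_int/bnd_cst.
rewrite Rint_cst (@RintegralD _ _ _ mu _ (fun x => a * f x) (fun x => b * g x)) //; last 2 first.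
- exact/bnd_int/bnd_Z/bf.
- exact/bnd_int/bnd_Z/bg.
by rewrite (RintegralZl _ mI (bnd_int bf)) (RintegralZl _ mI (bnd_int bg)).
Qed.

Lemma bnd_sq f : bnd f -> bnd (fun x => f x ^+ 2).
Proof.
move=> [mf [lo [hi h]]]; split.
  suff -> : (fun x => f x ^+ 2) = (f \* f) by exact: measurable_realfun.measurable_funM.
  by apply/funext => x; rewrite expr2.
exists 0, ((`|lo| + `|hi|) ^+ 2) => w Iw.
have /andP[p q] := h w Iw; have := ler_norm hi; have := ler_norm (-lo); rewrite normrN.
have := normr_ge0 lo; have := normr_ge0 hi => *.
apply/andP; split; first exact: sqr_ge0.
rewrite !expr2; nra.
Qed.

Lemma Rint_eq f g : {in I01, f =1 g} ->
  \int[mu]_(x in I01) f x = \int[mu]_(x in I01) g x.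
Proof. by move=> h; apply: eq_Rintegral. Qed.

Lemma Rint_bnds f lo hi : bnd f -> (forall w, I01 w -> lo <= f w <= hi) ->
  lo <= \int[mu]_(x in I01) f x <= hi.
Proof.
move=> bf h; apply/andP; split.
  rewrite -[X in X <= _]Rint_cst; apply: Rint_le => //; first exact: bnd_cst.
  by move=> w Iw; have /andP[] := h w Iw.
rewrite -[X in _ <= X]Rint_cst; apply: Rint_le => //; first exact: bnd_cst.
by move=> w Iw; have /andP[] := h w Iw.
Qed.

Variables (mum mup sgm sgp h0 h1 : R).
Hypotheses (hm0 : 0 < mum) (hm : mum < mup) (hs0 : 0 < sgm) (hs : sgm < sgp).
Ltac cp := have ? := hm0; have ? := hm; have ? := hs0; have ? := hs.

Definition Qf (x y : R) := (mup + mum) * x + (sgp + sgm) * y + - (mum * mup + sgm * sgp).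

Lemma psiE x y : psi mum mup sgm sgp h0 h1 x y = (h0 * x + h1 * y) ^+ 2 / Qf x y.
Proof. by rewrite /psi /Qf /muM /sgM; congr (_ / _); field. Qed.

Lemma Qf_pos x y : inD mum mup sgm sgp x y -> mum ^+ 2 + sgm ^+ 2 <= Qf x y.
Proof.
move=> [/andP[a b] /andP[c d]]; rewrite /Qf !expr2.
have e1 : 0 <= (mup + mum) * (x - mum).
  apply: mulr_ge0; cp; lra.
have e2 : 0 <= (sgp + sgm) * (y - sgm).
  apply: mulr_ge0; cp; lra.
lra.
Qed.

Lemma adm_bnd mu0 sg0 : admissible mum mup sgm sgp mu0 sg0 -> bnd mu0 /\ bnd sg0.
Proof.
move=> [m1 [m2 h]]; split; split => //.
  by exists mum, mup => w /mem_set /h [].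
by exists sgm, sgp => w /mem_set /h [].
Qed.

Lemma J_facts mu0 sg0 : admissible mum mup sgm sgp mu0 sg0 ->
  let X := \int[mu]_(x in I01) mu0 x in let Y := \int[mu]_(x in I01) sg0 x in
  inD mum mup sgm sgp X Y /\
  \int[mu]_(x in I01) (h0 * mu0 x + h1 * sg0 x) = h0 * X + h1 * Y /\
  mum ^+ 2 + sgm ^+ 2 <= \int[mu]_(x in I01) (mu0 x ^+ 2 + sg0 x ^+ 2) /\
  \int[mu]_(x in I01) (mu0 x ^+ 2 + sg0 x ^+ 2) <= Qf X Y.
Proof.
move=> ad; have [b1 b2] := adm_bnd ad; have [_ [_ h]] := ad.
move=> X Y; split.
  split; apply: Rint_bnds => // w /mem_set /h []//.
split.
  rewrite -[RHS]addr0 -Rint_lin //; apply: Rint_eq => w _; by rewrite addr0.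
have bs : bnd (fun x => mu0 x ^+ 2 + sg0 x ^+ 2) by apply: bnd_D; exact: bnd_sq.
split.
  rewrite -[X in X <= _]Rint_cst; apply: Rint_le => //; first exact: bnd_cst.
  move=> w /mem_set /h [/andP[a b] /andP[c d]]; rewrite !expr2; cp.
  have e1 : 0 <= (mu0 w - mum) * (mu0 w + mum) by apply: mulr_ge0; lra.
  have e2 : 0 <= (sg0 w - sgm) * (sg0 w + sgm) by apply: mulr_ge0; lra.
  lra.
rewrite /Qf -Rint_lin //; apply: Rint_le => //; first exact: bnd_lin.
move=> w /mem_set /h [/andP[a b] /andP[c d]]; rewrite !expr2; cp.
have e1 : 0 <= (mu0 w - mum) * (mup - mu0 w) by apply: mulr_ge0; lra.
have e2 : 0 <= (sg0 w - sgm) * (sgp - sg0 w) by apply: mulr_ge0; lra.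
lra.
Qed.

Lemma J_ge mu0 sg0 : admissible mum mup sgm sgp mu0 sg0 ->
  psi mum mup sgm sgp h0 h1 (\int[mu]_(x in I01) mu0 x) (\int[mu]_(x in I01) sg0 x)
  <= J h0 h1 mu0 sg0.
Proof.
move=> ad; have [hD [hN [h1' h2']]] := J_facts ad.
rewrite psiE /J hN /=; apply: ler_wpM2l; first exact: sqr_ge0.
have p : 0 < mum ^+ 2 + sgm ^+ 2 by rewrite addr_gt0 // exprn_gt0.
rewrite lef_pV2 ?posrE //.
  exact: lt_le_trans p (le_trans h1' h2').
exact: lt_le_trans p h1'.
Qed.

Lemma J_eq mu0 sg0 : admissible mum mup sgm sgp mu0 sg0 ->
  (forall w, I01 w -> mu0 w = mum \/ mu0 w = mup) ->
  (forall w, I01 w -> sg0 w = sgm \/ sg0 w = sgp) ->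
  J h0 h1 mu0 sg0 =
  psi mum mup sgm sgp h0 h1 (\int[mu]_(x in I01) mu0 x) (\int[mu]_(x in I01) sg0 x).
Proof.
move=> ad e1 e2; have [hD [hN _]] := J_facts ad.
have [b1 b2] := adm_bnd ad.
rewrite psiE /J hN /Qf -Rint_lin //; congr (_ / _); apply: Rint_eq => w /set_mem Iw.
by case: (e1 w Iw) => ->; case: (e2 w Iw) => ->; rewrite !expr2; ring.
Qed.

Lemma Rint_indic (C : set R) r : measurable C -> C `<=` I01 -> mu C = r%:E ->
  \int[mu]_(x in I01) (\1_C x : R) = r.
Proof.
move=> mC CI muC; rewrite /Rintegral.
have := integral_indic mu mI mC; move=> /= ->.
by rewrite setIidl // muC.
Qed.

Lemma bnd_indic (C : set R) : measurable C -> bnd (\1_C : R -> R).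
Proof.
move=> mC; split; first exact: measurable_realfun.measurable_indic.
exists 0, 1 => w _; rewrite indicE; case: (w \in C) => /=; rewrite ?lexx ?ler01 //.
Qed.

Lemma pair_ok (lo hi z : R) (C : set R) (f : R -> R) : measurable C -> C `<=` I01 ->
  mu C = ((hi - z) / (hi - lo))%:E -> lo < hi ->
  (forall w, w \in I01 -> f w = lo * \1_C w + hi * \1_(I01 `\` C) w) ->
  bnd f /\ (forall w, I01 w -> f w = lo \/ f w = hi) /\ \int[mu]_(x in I01) f x = z.
Proof.
move=> mC CI muC lh hf.
have ef : forall w, I01 w -> f w = (lo - hi) * \1_C w + 0 * \1_C w + hi.
  move=> w Iw; rewrite hf ?inE //= !indicE; have : w \in I01 by rewrite inE.
  case: (boolP (w \in C)) => wC wI; rewrite in_setD wC wI /=; ring.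
have bf : bnd f.
  have [m1 [l [u hb]]] := bnd_lin (lo - hi) 0 hi (bnd_indic mC) (bnd_indic mC).
  split; last by exists l, u => w Iw; rewrite ef //; exact: hb.
  by apply: eq_measurable_fun m1 => w /set_mem Iw; rewrite ef.
split => //; split.
  move=> w Iw; rewrite hf ?inE // !indicE; have : w \in I01 by rewrite inE.
  case: (boolP (w \in C)) => wC wI; rewrite in_setD wC wI /=; [left|right]; ring.
rewrite (@Rint_eq f (fun w => (lo - hi) * \1_C w + 0 * \1_C w + hi)); last first.
  by move=> w /set_mem Iw; rewrite ef.
rewrite Rint_lin; try exact: bnd_indic.
rewrite (Rint_indic mC CI muC); field; rewrite subr_eq0; apply/eqP => e; move: lh; rewrite e ltxx.
by [].
Qed.

Lemma const_ok (c : R) (f : R -> R) : (forall w, w \in I01 -> f w = c) ->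
  bnd f /\ (forall w, I01 w -> f w = c) /\ \int[mu]_(x in I01) f x = c.
Proof.
move=> hf; have hf' : forall w, I01 w -> f w = c by move=> w Iw; rewrite hf ?inE.
split; last split => //.
  split; last by exists c, c => w Iw; rewrite hf' // lexx.
  by apply: eq_measurable_fun (measurable_cst c) => w /set_mem Iw; rewrite hf'.
by rewrite (@Rint_eq f (fun => c)) ?Rint_cst // => w /set_mem Iw; rewrite hf'.
Qed.
End Int.
Section S.
Variable R : realType.
Lemma c1 (p : R * R) : q.1 @[q --> nbhs p] --> p.1.
Proof. exact: cvg_fst. Qed.
Lemma c2 (p : R * R) : q.2 @[q --> nbhs p] --> p.2.
Proof. exact: cvg_snd. Qed.
Lemma clin (a b c : R) (p : R * R) : (a * q.1 + b * q.2 + c) @[q --> nbhs p] --> a * p.1 + b * p.2 + c.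
Proof.
apply: cvgD; last exact: cvg_cst.
apply: cvgD; apply: cvgM; (exact: cvg_cst || exact: c1 || exact: c2).
Qed.
Lemma cquot (a b c d e f : R) (p : R * R) : d * p.1 + e * p.2 + f != 0 ->
  ((a * q.1 + b * q.2 + c) ^+ 2 / (d * q.1 + e * q.2 + f)) @[q --> nbhs p] -->
  (a * p.1 + b * p.2 + c) ^+ 2 / (d * p.1 + e * p.2 + f).
Proof.
move=> h; apply: cvgM; last by apply: cvgV => //; exact: clin.
rewrite expr2; apply: cvgM; exact: clin.
Qed.
End S.
Section Line.
Variable R : realType.

Lemma exit1 (lo hi x a : R) : lo <= x <= hi -> a != 0 ->
  exists T, 0 <= T /\ (x + T * a = lo \/ x + T * a = hi) /\
    forall t, 0 <= t <= T -> lo <= x + t * a <= hi.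
Proof.
move=> /andP[l h] a0; have [ap|an] := ltP 0 a.
  exists ((hi - x) / a); have hT : (hi - x) / a * a = hi - x by field.
  split; first by apply: divr_ge0; lra.
  split; first by right; lra.
  move=> t /andP[t0 tT]; have e1 : 0 <= t * a by apply: mulr_ge0; lra.
  have e2 : 0 <= ((hi - x) / a - t) * a by apply: mulr_ge0; lra.
  apply/andP; split; lra.
have an' : a < 0 by rewrite lt_neqAle a0 an.
exists ((lo - x) / a); have hT : (lo - x) / a * a = lo - x by field.
split; first by rewrite -mulrNN -invrN; apply: divr_ge0; lra.
split; first by left; lra.
move=> t /andP[t0 tT]; have e1 : t * a <= 0 by apply: mulr_ge0_le0; lra.
have e2 : ((lo - x) / a - t) * a <= 0 by apply: mulr_ge0_le0; lra.
apply/andP; split; lra.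
Qed.

Lemma exit2 (mum mup sgm sgp x y a b : R) : inD mum mup sgm sgp x y -> (a != 0) || (b != 0) ->
  exists t, 0 <= t /\ onBoundaryD mum mup sgm sgp (x + t * a) (y + t * b).
Proof.
move=> [hx hy] ab.
have [a0|a0] := eqVneq a 0.
  rewrite a0 eqxx /= in ab; have [T [T0 [Te Tin]]] := exit1 hy ab.
  exists T; split => //; split.
    by split; [rewrite a0 mulr0 addr0 | apply: Tin; rewrite T0 lexx].
  by right; right; [case: Te => ->; [left|right]].
have [b0|b0] := eqVneq b 0.
  have [T [T0 [Te Tin]]] := exit1 hx a0.
  exists T; split => //; split.
    by split; [apply: Tin; rewrite T0 lexx | rewrite b0 mulr0 addr0].
  by case: Te => ->; [left|right; left].
have [T [T0 [Te Tin]]] := exit1 hx a0.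
have [S [S0 [Se Sin]]] := exit1 hy b0.
have [TS|ST] := leP T S.
  exists T; split => //; split; first by split; [apply: Tin|apply: Sin]; rewrite T0 ?lexx ?TS.
  by case: Te => ->; [left|right; left].
exists S; split => //; split; first by split; [apply: Tin|apply: Sin]; rewrite S0 ?lexx ?(ltW ST).
by right; right; case: Se => ->; [left|right].
Qed.
End Line.

Lemma exists_bmin (R : realType) (mum mup sgm sgp h0 h1 : R) :
  0 < mum -> mum < mup -> 0 < sgm -> sgm < sgp ->
  (forall x y, inD mum mup sgm sgp x y -> 0 < h0 * x + h1 * y) ->
  exists xs ys, onBoundaryD mum mup sgm sgp xs ys /\
                 psi_minimizer mum mup sgm sgp h0 h1 xs ys.
Proof.
move=> hm0 hm hs0 hs hpos.
pose A : set (R * R) := `[mum, mup] `*` `[sgm, sgp].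
pose f := fun q : R * R => psi mum mup sgm sgp h0 h1 q.1 q.2.
have AP : forall q, A q <-> inD mum mup sgm sgp q.1 q.2.
  by move=> q; rewrite /A /inD /= !in_itv /=.
have A0 : A !=set0 by exists (mum, sgm); apply/AP; split; rewrite lexx ltW.
have cA : compact A by apply: compact_setX; exact: segment_compact.
have cf : {within A, continuous f}.
  apply: continuous_in_subspaceT => q /set_mem /AP Dq.
  have fE : f = fun q : R * R => (h0 * q.1 + h1 * q.2 + 0) ^+ 2 /
     ((mup + mum) * q.1 + (sgp + sgm) * q.2 + - (mum * mup + sgm * sgp)).
    apply/funext => r; rewrite /f psiE addr0 /Qf //.
  rewrite fE; apply: cquot; rewrite gt_eqF //.
  apply: lt_le_trans (Qf_pos hm0 hm hs0 hs Dq); rewrite addr_gt0 // exprn_gt0 //.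
have [[x y] /set_mem /AP /= Dc minc] := compact_EVT_min A0 cA cf.
have hne : (h1 != 0) || (- h0 != 0).
  case: (eqVneq h1 0) => //= e1; rewrite oppr_eq0; apply/eqP => e0.
  by have := hpos x y Dc; rewrite e0 e1 !mul0r addr0 ltxx.
pose dl := (mup + mum) * h1 - (sgp + sgm) * h0.
have [a [b [ab [Hab dab]]]] : exists a b, ((a != 0) || (b != 0)) /\ h0 * a + h1 * b = 0 /\
    0 <= (mup + mum) * a + (sgp + sgm) * b.
  have [dl0|dl0] := leP 0 dl.
    exists h1, (- h0); split => //; split; first ring.
    by move: dl0; rewrite /dl mulrN.
  exists (- h1), h0; split; first by move: hne; rewrite !oppr_eq0.
  split; first ring.
  have : 0 <= - dl by rewrite oppr_ge0 ltW.
  by rewrite /dl opprB mulrN addrC.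
have [t [t0 Bt]] := exit2 Dc ab.
exists (x + t * a), (y + t * b); split => //.
have Dt := Bt.1.
have le1 : psi mum mup sgm sgp h0 h1 (x + t * a) (y + t * b) <= psi mum mup sgm sgp h0 h1 x y.
  rewrite !psiE.
  have -> : h0 * (x + t * a) + h1 * (y + t * b) = h0 * x + h1 * y.
    by rewrite !mulrDr addrACA mulrCA [h1 * (t * b)]mulrCA -mulrDr Hab mulr0 addr0.
  apply: ler_wpM2l; first exact: sqr_ge0.
  have p : 0 < mum ^+ 2 + sgm ^+ 2 by rewrite addr_gt0 // exprn_gt0.
  rewrite lef_pV2 ?posrE.
  - rewrite /Qf; have : 0 <= t * ((mup + mum) * a + (sgp + sgm) * b) by apply: mulr_ge0.
    move=> hh; rewrite -subr_ge0; apply: le_trans hh _; rewrite le_eqVlt; apply/orP; left; apply/eqP; ring.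
  - exact: lt_le_trans p (Qf_pos hm0 hm hs0 hs Dt).
  - exact: lt_le_trans p (Qf_pos hm0 hm hs0 hs Dc).
split => // x' y' D'.
apply: le_trans le1 _; apply: (minc (x', y')); apply/mem_set/AP; exact: D'.
Qed.

Lemma finish (R : realType) (mum mup sgm sgp h0 h1 : R) xs ys (mus sgs : R -> R) :
  0 < mum -> mum < mup -> 0 < sgm -> sgm < sgp ->
  psi_minimizer mum mup sgm sgp h0 h1 xs ys ->
  bnd mus -> bnd sgs ->
  (forall w, (`[0, 1]%classic : set R) w -> mus w = mum \/ mus w = mup) ->
  (forall w, (`[0, 1]%classic : set R) w -> sgs w = sgm \/ sgs w = sgp) ->
  \int[lebesgue_measure]_(x in (`[0, 1]%classic : set R)) mus x = xs ->
  \int[lebesgue_measure]_(x in (`[0, 1]%classic : set R)) sgs x = ys ->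
  admissible mum mup sgm sgp mus sgs /\
     forall mu sg : R -> R, admissible mum mup sgm sgp mu sg ->
       J h0 h1 mus sgs <= J h0 h1 mu sg.
Proof.
move=> hm0 hm hs0 hs [_ minp] [m1 _] [m2 _] v1 v2 i1 i2.
have ad : admissible mum mup sgm sgp mus sgs.
  split => //; split => // w /set_mem Iw; split.
    by case: (v1 w Iw) => ->; rewrite lexx ltW.
  by case: (v2 w Iw) => ->; rewrite lexx ltW.
split => // mu sg adm.
rewrite (J_eq h0 h1 hm0 hm hs0 hs ad v1 v2) i1 i2.
apply: le_trans (J_ge h0 h1 hm0 hm hs0 hs adm); apply: minp.
by have [] := J_facts h0 h1 hm0 hm hs0 hs adm.
Qed.

Theorem mainTheorem7 (R : realType) (mum mup sgm sgp h0 h1 : R) :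
  0 < mum -> mum < mup -> 0 < sgm -> sgm < sgp ->
  (forall x y, inD mum mup sgm sgp x y -> 0 < h0 * x + h1 * y) ->
  (exists xs ys, onBoundaryD mum mup sgm sgp xs ys /\
                 psi_minimizer mum mup sgm sgp h0 h1 xs ys) /\
  (forall xs ys, onBoundaryD mum mup sgm sgp xs ys ->
     psi_minimizer mum mup sgm sgp h0 h1 xs ys ->
   forall A B : set R, measurable A -> measurable B ->
     A `<=` (`[0, 1] : set R) -> B `<=` (`[0, 1] : set R) ->
     (@lebesgue_measure R) A = ((mup - xs) / (mup - mum))%:E ->
     (@lebesgue_measure R) B = ((sgp - ys) / (sgp - sgm))%:E ->
   forall mus sgs : R -> R,
     star_pair mum mup sgm sgp xs ys A B mus sgs ->
     admissible mum mup sgm sgp mus sgs /\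
     forall mu sg : R -> R, admissible mum mup sgm sgp mu sg ->
       J h0 h1 mus sgs <= J h0 h1 mu sg).
Proof.
move=> hm0 hm hs0 hs hpos; split; first exact: exists_bmin.
move=> xs ys _ pm A B mA mB AI BI muA muB mus sgs sp.
move: pm muA muB; case: sp => [[-> h]|[[-> h]|[[-> h]|[-> h]]]] pm muA muB.
- have [b1 [v1 i1]] := @const_ok R mum mus (fun w Iw => (h w Iw).1).
  have [b2 [v2 i2]] := pair_ok mB BI muB hs (fun w Iw => (h w Iw).2).
  apply: (finish hm0 hm hs0 hs pm b1 b2) => //.
  by move=> w Iw; left; exact: v1.
- have [b1 [v1 i1]] := @const_ok R mup mus (fun w Iw => (h w Iw).1).
  have [b2 [v2 i2]] := pair_ok mB BI muB hs (fun w Iw => (h w Iw).2).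
  apply: (finish hm0 hm hs0 hs pm b1 b2) => //.
  by move=> w Iw; right; exact: v1.
- have [b2 [v2 i2]] := @const_ok R sgm sgs (fun w Iw => (h w Iw).2).
  have [b1 [v1 i1]] := pair_ok mA AI muA hm (fun w Iw => (h w Iw).1).
  apply: (finish hm0 hm hs0 hs pm b1 b2) => //.
  by move=> w Iw; left; exact: v2.
- have [b2 [v2 i2]] := @const_ok R sgp sgs (fun w Iw => (h w Iw).2).
  have [b1 [v1 i1]] := pair_ok mA AI muA hm (fun w Iw => (h w Iw).1).
  apply: (finish hm0 hm hs0 hs pm b1 b2) => //.
  by move=> w Iw; right; exact: v2.
Qed.
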